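(* Let $n\ge1$ and $d\ge1$, and let $w$ be a positive weight vector. Then there is a design $D\subset\mathbb{R}^d$ with $n$ points which minimises $A(w,L)$ among all designs of sample size $n$ and their identifiable staircases; more precisely, the quantity $$A^*(w,n)=\min_{D:\,|D|=n}\ \min_{L\in\mathcal{L}_a(D)}A(w,L)$$ is achieved by a generic design.
   Context: A design $D\subset\mathbb{R}^d$ is a finite set of $n=|D|$ distinct points. A model basis is a finite set $L\subset\mathbb{Z}^d_{\ge 0}$; it is identifiable by $D$ if $|L|=n$ and the matrix $[x^\alpha]_{x\in D,\alpha\in L}$ (with $x^\alpha=\prod_i x_i^{\alpha_i}$) is invertible. $L$ is a staircase if $\alpha\in L$, $\beta\le\alpha$ componentwise imply $\beta\in L$. The aberration is $A(w,L)=\frac1n\sum_{\alpha\in L}\sum_{i=1}^dw_i\alpha_i$. For a term ordering $\succ$, $L(D,\succ)$ is the set of exponents of monomials not divisible by leading terms of elements of the ideal $I(D)$ of polynomials vanishing on $D$; the algebraic fan is $\mathcal{L}_a(D)=\{L(D,\succ):\succ\text{ a term ordering}\}$. A staircase $L$ with $|L|=n$ is a corner cut if some affine hyperplane in $\mathbb{R}^d$ strictly separates $L$ from $\mathbb{Z}^d_{\ge0}\setminus L$. A design with $n$ points is generic if every corner cut staircase of size $n$ in $d$ dimensions is identifiable by it. *)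

(* Defs.v *)
From HB Require Import structures.
From mathcomp Require Import all_boot all_order all_algebra.
From mathcomp Require Import mpoly.
From mathcomp Require Import Rstruct.
From Stdlib Require Rdefinitions.
Notation R := Rdefinitions.R.
Set Implicit Arguments. Unset Strict Implicit. Unset Printing Implicit Defensive.
Import Order.TTheory GRing.Theory Num.Theory.
Local Open Scope ring_scope.


Definition point (d : nat) := {ffun 'I_d -> R}.
Definition expo (d : nat) := 'X_{1..d}.

Definition is_design (d n : nat) (D : seq (point d)) : Prop :=
  uniq D /\ size D = n.

Definition monval (d : nat) (x : point d) (a : expo d) : R :=
  \prod_(i < d) x i ^+ a i.

(* componentwise order on exponents (= divisibility of monomials) *)
Definition expo_le (d : nat) (b a : expo d) : Prop := forall i : 'I_d, (b i <= a i)%N :> Prop.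

Definition staircase (d : nat) (L : seq (expo d)) : Prop :=
  uniq L /\ forall a b : expo d, a \in L -> expo_le b a -> b \in L.

Definition design_matrix (d n : nat) (D : seq (point d)) (L : seq (expo d)) : 'M[R]_n :=
  \matrix_(i < n, j < n) monval (nth [ffun=> 0] D i) (nth 0%MM L j).

Definition identifiable (d n : nat) (D : seq (point d)) (L : seq (expo d)) : Prop :=
  uniq L /\ size L = n /\ size D = n /\ \det (design_matrix n D L) != 0.

Definition aberration (d n : nat) (w : 'I_d -> R) (L : seq (expo d)) : R :=
  (n%:R)^-1 * \sum_(a <- L) \sum_(i < d) w i * (a i)%:R.

Definition term_order (d : nat) (le : expo d -> expo d -> Prop) : Prop :=
  (forall a, le a a) /\
  [/\ (forall a b, le a b -> le b a -> a = b),
      (forall a b c, le a b -> le b c -> le a c),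
      (forall a b, le a b \/ le b a),
      (forall a, le 0%MM a) &
      (forall a b c, le a b -> le (a + c)%MM (b + c)%MM)].

Definition vanishes_on (d : nat) (D : seq (point d)) (f : {mpoly Rdefinitions.R[d]}) : Prop :=
  forall x, x \in D -> f.@[fun i => x i] = 0.

Definition leading_expo (d : nat) (le : expo d -> expo d -> Prop)
    (f : {mpoly Rdefinitions.R[d]}) (a : expo d) : Prop :=
  a \in msupp f /\ forall b, b \in msupp f -> le b a.

Definition in_L_of (d : nat) (D : seq (point d)) (le : expo d -> expo d -> Prop)
    (a : expo d) : Prop :=
  forall (f : {mpoly Rdefinitions.R[d]}) (b : expo d),
    vanishes_on D f -> f != 0 -> leading_expo le f b -> ~ expo_le b a.

Definition in_algebraic_fan (d : nat) (D : seq (point d)) (L : seq (expo d)) : Prop :=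
  uniq L /\ exists le, term_order le /\ forall a, a \in L <-> in_L_of D le a.

Definition corner_cut (d n : nat) (L : seq (expo d)) : Prop :=
  staircase L /\ size L = n /\
  exists (c : 'I_d -> R) (b : R),
    forall a : expo d,
      (a \in L -> \sum_(i < d) c i * (a i)%:R < b) /\
      (a \notin L -> \sum_(i < d) c i * (a i)%:R > b).

Definition generic (d n : nat) (D : seq (point d)) : Prop :=
  is_design n D /\ forall L, corner_cut n L -> identifiable n D L.

(* Main.v *)
Require Import Defs.
From HB Require Import structures.
From mathcomp Require Import all_boot all_order all_algebra.
From mathcomp Require Import mpoly.
From mathcomp Require Import Rstruct.
From Stdlib Require Rdefinitions.
From Stdlib Require Import Classical ClassicalEpsilon.
From mathcomp Require Import fingroup perm.
From mathcomp Require Import zify ring lra.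
Import Order.TTheory GRing.Theory Num.Theory.
Local Open Scope ring_scope.
Set Implicit Arguments. Unset Strict Implicit. Unset Printing Implicit Defensive.

Lemma nat_min_from (h : nat -> nat) (N : nat) :
  exists i, (N <= i)%N /\ forall j, (N <= j)%N -> (h i <= h j)%N.
Proof.
suff H : forall v j, (N <= j)%N -> (h j <= v)%N ->
  exists i, (N <= i)%N /\ forall j, (N <= j)%N -> (h i <= h j)%N.
  by apply: (H (h N) N).
elim=> [|v IH] j hj hv.
  exists j; split=> // j' _; lia.
destruct (classic (forall j', (N <= j')%N -> (h j <= h j')%N)) as [H|H].
  by exists j.
apply not_all_ex_not in H as [j' H].
apply imply_to_and in H as [H1 H2].
apply: (IH j') => //.
move/negP: H2; lia.
Qed.

Lemma nat_subseq_mono (h : nat -> nat) :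
  exists g : nat -> nat, (forall k, (g k < g k.+1)%N) /\
    (forall k, (h (g k) <= h (g k.+1))%N).
Proof.
have H : forall N, exists i, (N <= i)%N /\ forall j, (N <= j)%N -> (h i <= h j)%N.
  by move=> N; apply: nat_min_from.
pose ch N := proj1_sig (constructive_indefinite_description _ (H N)).
have chP N : (N <= ch N)%N /\ forall j, (N <= j)%N -> (h (ch N) <= h j)%N.
  exact: (proj2_sig (constructive_indefinite_description _ (H N))).
pose g := fix g k := if k is k'.+1 then ch (g k').+1 else ch 0%N.
exists g; split=> k /=.
  by case: (chP (g k).+1).
pose Nk k := if k is k'.+1 then (g k').+1 else 0%N.
have gE : g k = ch (Nk k) by case: k.
case: (chP (Nk k)) => h1 h2; rewrite gE; apply: h2.
rewrite -gE /=; case: (chP (g k).+1) => h3 _; lia.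
Qed.

Lemma mono_chain (f : nat -> nat) : (forall k, (f k <= f k.+1)%N) ->
  forall m m', (m <= m')%N -> (f m <= f m')%N.
Proof.
move=> H m m' /subnK <-; elim: (m' - m)%N => [|k IH] //=.
by rewrite addSn; apply: leq_trans IH (H _).
Qed.

Lemma smono_chain (f : nat -> nat) : (forall k, (f k < f k.+1)%N) ->
  forall m m', (m < m')%N -> (f m < f m')%N.
Proof.
move=> H m m' /subnK <-; elim: (m' - m.+1)%N => [|k IH] /=.
  by rewrite ?add0n; apply: H.
by rewrite addSn; apply: ltn_trans IH (H _).
Qed.

Lemma dickson_cs d (cs : seq 'I_d) (s : nat -> 'X_{1..d}) :
  exists g : nat -> nat, (forall k, (g k < g k.+1)%N) /\
    forall c, c \in cs -> forall k, (s (g k) c <= s (g k.+1) c)%N.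
Proof.
elim: cs => [|c cs [g [Hg Hc]]].
  by exists id; split.
have [g' [Hg' Hc']] := nat_subseq_mono (fun k => s (g k) c).
exists (fun k => g (g' k)); split.
  by move=> k; apply: smono_chain.
move=> c'; rewrite inE => /orP [/eqP -> | Hin] k; first exact: Hc'.
apply: (mono_chain (f := fun k => s (g k) c')) => //.
  by move=> k'; apply: Hc.
exact: ltnW.
Qed.

Lemma dickson d (s : nat -> 'X_{1..d}) :
  exists i j, (i < j)%N /\ forall c, (s i c <= s j c)%N.
Proof.
have [g [Hg Hc]] := dickson_cs (enum 'I_d) s.
exists (g 0%N), (g 1%N); split => // c; apply: Hc; by rewrite mem_enum.
Qed.

Lemma digits_sumS m K (x : 'I_m.+1 -> nat) :
  (\sum_(i < m.+1) K ^ i * x i = x ord0 + K * \sum_(i < m) K ^ i * x (lift ord0 i))%N.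
Proof.
rewrite big_ord_recl expn0 mul1n big_distrr /=; congr (_ + _)%N.
by apply: eq_bigr => i _; rewrite /bump /= add1n expnS mulnA.
Qed.

Lemma digits_inj m K (x y : 'I_m -> nat) :
  (forall i, x i < K)%N -> (forall i, y i < K)%N ->
  (\sum_(i < m) K ^ i * x i = \sum_(i < m) K ^ i * y i)%N -> forall i, x i = y i.
Proof.
elim: m x y => [|m IH] x y hx hy e i; first by case: i.
have K0 : (0 < K)%N by have := hx ord0; lia.
rewrite !digits_sumS in e.
have e0 : x ord0 = y ord0.
  have := congr1 (modn^~ K) e.
  by rewrite ![(_ + K * _)%N]addnC ![(K * _)%N]mulnC !modnMDl !modn_small.
rewrite e0 in e; move/addnI/eqP: e; rewrite eqn_pmul2l // => /eqP e.
have := IH (fun j => x (lift ord0 j)) (fun j => y (lift ord0 j)) (fun j => hx _) (fun j => hy _) e.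
by move=> H; case: (unliftP ord0 i) => [j ->|->].
Qed.

Lemma digits_lt m K (x : 'I_m -> nat) :
  (forall i, x i < K)%N -> (\sum_(i < m) K ^ i * x i < K ^ m)%N.
Proof.
elim: m x => [|m IH] x hx; first by rewrite big_ord0 expn0.
have K0 : (0 < K)%N by have := hx ord0; lia.
rewrite digits_sumS expnS.
have := IH (fun j => x (lift ord0 j)) (fun j => hx _).
set S := (\sum_(i < m) _)%N => hS.
have := hx ord0; move: (x ord0) => a ha.
have : (S.+1 <= K ^ m)%N by [].
move=> h2; have : (K * S.+1 <= K * K ^ m)%N by rewrite leq_mul2l h2 orbT.
lia.
Qed.

Definition phiM (d M : nat) (a : expo d) : nat := (\sum_(i < d) M ^ i * a i)%N.
Definition gpt (d M N : nat) (k : nat) : point d :=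
  [ffun i : 'I_d => (2 : R) ^+ (N ^ k * M ^ i)].
Definition gD (n d : nat) : seq (point d) :=
  [seq gpt d n (n ^ d) k | k <- iota 0 n].

Lemma monval_gpt d M N k a :
  monval (gpt d M N k) a = (2 : R) ^+ (N ^ k * phiM M a).
Proof.
rewrite /monval; under eq_bigr => i _ do rewrite ffunE -exprM.
rewrite prodrXr; congr (_ ^+ _); rewrite /phiM big_distrr /=.
by apply: eq_bigr => i _; rewrite mulnA.
Qed.

Lemma nth_gD n d k : (k < n)%N -> nth [ffun=> 0] (gD n d) k = gpt d n (n ^ d) k.
Proof. by move=> hk; rewrite /gD (nth_map 0%N) ?size_iota // nth_iota. Qed.

Lemma size_gD n d : size (gD n d) = n.
Proof. by rewrite size_map size_iota. Qed.

Lemma det_int_nz n (E : 'S_n -> nat) : injective E ->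
  (\sum_(s : 'S_n) (-1) ^+ s * (2 : int) ^+ E s) != 0.
Proof.
move=> Einj.
pose s0 := [arg min_(s < (1 : 'S_n)%g | true) E s].
have Hmin : forall s, (E s0 <= E s)%N.
  by rewrite /s0; case: arg_minnP => // s _ H t; apply: H.
rewrite (bigD1 s0) //=; apply/eqP => e.
have Hdv : (2 ^+ (E s0).+1 %| \sum_(s | s != s0) (-1) ^+ s * (2 : int) ^+ E s)%Z.
  apply: rpred_sum => s hs; apply: dvdz_mull.
  have lt : (E s0 < E s)%N.
    rewrite ltn_neqAle Hmin andbT; apply/eqP => /Einj h.
    by rewrite h eqxx in hs.
  by rewrite -(subnKC lt) exprD dvdz_mulr.
have : (2 ^+ (E s0).+1 %| (-1) ^+ s0 * (2 : int) ^+ E s0)%Z.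
  have -> : (-1) ^+ s0 * (2 : int) ^+ E s0 =
     - \sum_(s | s != s0) (-1) ^+ s * (2 : int) ^+ E s.
    by apply/eqP; rewrite -addr_eq0 e.
  by rewrite rpredN.
rewrite dvdzE abszM absz_sign mul1n !abszX /=.
move/dvdn_leq; rewrite expn_gt0 /= => /(_ isT).
by rewrite leq_exp2l // ltnn.
Qed.

Lemma det_gD n d L : uniq L -> size L = n ->
  (forall a : expo d, a \in L -> forall i, (a i < n)%N) ->
  \det (design_matrix n (gD n d) L) != 0.
Proof.
move=> uL sL bL.
pose N := (n ^ d)%N.
pose E (s : 'S_n) := (\sum_(k < n) N ^ k * phiM n (nth 0%MM L (s k)))%N.
pose A : 'M[int]_n := \matrix_(k, j) (2 : int) ^+ (N ^ k * phiM n (nth 0%MM L j)).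
have -> : design_matrix n (gD n d) L = map_mx (fun z : int => (z%:~R : R)) A.
  by apply/matrixP => k j; rewrite !mxE nth_gD // monval_gpt rmorphXn.
rewrite det_map_mx intr_eq0.
have -> : \det A = \sum_(s : 'S_n) (-1) ^+ s * (2 : int) ^+ E s.
  rewrite /determinant; apply: eq_bigr => s _; congr (_ * _).
  by rewrite /E -prodrXr; apply: eq_bigr => k _; rewrite mxE.
apply: det_int_nz.
have memL : forall j : 'I_n, nth 0%MM L j \in L.
  by move=> j; apply: mem_nth; rewrite sL.
have ph : forall j : 'I_n, (phiM n (nth 0%MM L j) < N)%N.
  by move=> j; apply: digits_lt => i; apply: bL.
move=> s t e; apply/permP => k.
have e1 := digits_inj (fun k => ph (s k)) (fun k => ph (t k)) e k.
have e2 := digits_inj (bL _ (memL (s k))) (bL _ (memL (t k))) e1.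
have e3 : nth 0%MM L (s k) = nth 0%MM L (t k) by apply/mnmP.
apply: val_inj; apply/eqP; rewrite -(nth_uniq 0%MM _ _ uL) ?sL //.
by rewrite e3 //=; apply: ltn_ord.
all: apply: ltn_ord.
Qed.

Lemma uniq_gD n d : (0 < d)%N -> uniq (gD n d).
Proof.
move=> d0; rewrite map_inj_in_uniq ?iota_uniq //.
move=> k l hk hl /(congr1 (fun f : point d => f (Ordinal d0))); rewrite !ffunE /= expn0 !muln1.
rewrite !mem_iota /= !add0n in hk hl.
case: (leqP n 1) => hn; first by lia.
have N2 : (1 < n ^ d)%N.
  rewrite -(subnKC d0) expnS; have := expn_gt0 n (d - 1); nia.
have two : (1 : R) < 2 by lra.
move=> e; have e1 : ((n ^ d) ^ k = (n ^ d) ^ l)%N.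
  by apply/eqP; rewrite eqn_leq -!(ler_eXn2l two) e lexx.
by apply/eqP; rewrite -(eqn_exp2l _ _ N2) e1.
Qed.

Definition em d (i : 'I_d) (k : nat) : expo d := (U_(i) *+ k)%MM.

Lemma emE d (i j : 'I_d) k : em i k j = if i == j then k else 0%N.
Proof. by rewrite /em mulmnE mnm1E; case: eqP => _; rewrite ?mul1n ?mul0n. Qed.

Lemma uniq_em d (i : 'I_d) m : uniq [seq em i k | k <- iota 0 m].
Proof.
rewrite map_inj_uniq ?iota_uniq // => k l /(congr1 (fun a : expo d => a i)).
by rewrite !emE eqxx.
Qed.

Lemma stair_bound d n (L : seq (expo d)) : staircase L -> size L = n ->
  forall a : expo d, a \in L -> forall i, (a i < n)%N.
Proof.
move=> [uL sL] <- a aL i.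
have := uniq_leq_size (uniq_em i (a i).+1).
rewrite size_map size_iota; apply=> b /mapP [k]; rewrite mem_iota => hk ->.
apply: (sL a) => // j; rewrite emE; case: eqP => [<-|_] //; lia.
Qed.

Lemma generic_gD n d : (0 < d)%N -> generic n (gD n d).
Proof.
move=> d0; split; first by split; [apply: uniq_gD | apply: size_gD].
move=> L [st [sL _]]; split; first by case: st.
split=> //; split; first exact: size_gD.
apply: det_gD => //; first by case: st.
exact: stair_bound st sL.
Qed.

Definition vv d n (D : seq (point d)) (a : expo d) : 'rV[R]_n :=
  \row_k monval (nth [ffun=> 0] D k) a.
Definition evp d n (D : seq (point d)) (f : {mpoly R[d]}) : 'rV[R]_n :=
  \row_k f.@[fun i => nth [ffun=> 0] D k i].

Lemma evp_sum d n (D : seq (point d)) f :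
  evp n D f = \sum_(m <- msupp f) f@_m *: vv n D m.
Proof.
apply/matrixP => i k; rewrite !mxE mevalE summxE.
by apply: eq_bigr => m _; rewrite !mxE.
Qed.

Lemma evp_sub d n (D : seq (point d)) m (A : 'M[R]_(m, n)) f :
  (forall a, (vv n D a <= A)%MS) -> (evp n D f <= A)%MS.
Proof.
move=> H; rewrite evp_sum; apply: summx_sub => a _; apply: scalemx_sub; exact: H.
Qed.

Lemma interp d n (D : seq (point d)) : (0 < d)%N -> uniq D -> size D = n ->
  forall k : 'I_n, exists (f : {mpoly R[d]}) (c : R),
    c != 0 /\ evp n D f = c *: delta_mx 0 k.
Proof.
move=> d0 uD sD k.
pose x (l : 'I_n) := nth [ffun=> 0] D l.
pose i0 := Ordinal d0.
pose sep (l : 'I_n) := odflt i0 [pick i | x l i != x k i].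
have sepP : forall l, l != k -> x l (sep l) != x k (sep l).
  move=> l hl; rewrite /sep; case: pickP => [i hi //|hn].
  have : x l = x k by apply/ffunP => i; have := hn i; rewrite /= => /negbFE/eqP.
  move/eqP; rewrite /x nth_uniq ?sD // => /eqP e.
  by move/eqP: hl; case; apply: val_inj.
pose f := \prod_(l < n | l != k) ('X_(sep l) - (x l (sep l))%:MP : {mpoly R[d]}).
pose c := \prod_(l < n | l != k) (x k (sep l) - x l (sep l)).
exists f, c; split.
  by apply/prodf_neq0 => l hl; rewrite subr_eq0 eq_sym sepP.
apply/matrixP => i m; rewrite !mxE (ord1 i) /=.
rewrite /f rmorph_prod /=.
under eq_bigr => l _ do rewrite mevalB mevalXU mevalC.
case: (eqVneq m k) => [-> | hmk]; first by rewrite mulr1.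
by rewrite mulr0 (bigD1 m) //= subrr mul0r.
Qed.

Lemma full_rank_bound d n (D : seq (point d)) m (A : 'M[R]_(m, n)) :
  (0 < d)%N -> uniq D -> size D = n ->
  (forall a, (vv n D a <= A)%MS) -> (n <= m)%N.
Proof.
move=> d0 uD sD H.
have : row_full A.
  rewrite -sub1mx; apply/row_subP => k; rewrite row1.
  have [f [c [c0 e]]] := interp d0 uD sD k.
  have -> : delta_mx 0 k = c^-1 *: evp n D f.
    by rewrite e scalerA mulVf // scale1r.
  by apply: scalemx_sub; apply: evp_sub.
rewrite /row_full => /eqP <-; exact: rank_leq_row.
Qed.

Lemma monvalD d (x : point d) (m c : expo d) :
  monval x (m + c)%MM = monval x m * monval x c.
Proof.
rewrite /monval -big_split /=; apply: eq_bigr => i _.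
by rewrite mnmDE exprD.
Qed.

Lemma fan_step d n (D : seq (point d)) (le : expo d -> expo d -> Prop)
   m (A : 'M[R]_(m, n)) (L : seq (expo d)) :
  size D = n -> term_order le ->
  (forall a, a \in L -> (vv n D a <= A)%MS) ->
  (forall a, a \in L <-> in_L_of D le a) ->
  forall a, ~~ (vv n D a <= A)%MS ->
  exists a', (le a' a /\ a' <> a) /\ ~~ (vv n D a' <= A)%MS.
Proof.
move=> sD [lrefl [lanti ltrans ltot l0 lcomp]] inA HL a Pa.
have naL : ~ in_L_of D le a.
  by move/HL => aL; move: Pa; rewrite inA.
have [f [b [van [fnz [[bS blead] bdiv]]]]] : exists f b,
   vanishes_on D f /\ f != 0 /\ leading_expo le f b /\ expo_le b a.
  apply: NNPP => C; apply: naL => f b vf fn lf ble.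
  by apply: C; exists f, b.
pose c := (a - b)%MM.
have ae : a = (b + c)%MM.
  by rewrite addmC /c submK //; apply/mnm_lepP => i; apply: bdiv.
apply: NNPP => C.
have allin : forall e, e \in rem b (msupp f) -> (vv n D (e + c)%MM <= A)%MS.
  move=> e; rewrite mem_rem_uniq ?msupp_uniq // => /andP [/= eb eS].
  apply: NNPP => Ne; apply: C; exists (e + c)%MM; split; last by apply/negP.
  split; first by rewrite ae; apply: lcomp; apply: blead.
  rewrite ae => /(congr1 (fun z => (z - c)%MM)); rewrite !addmK => ebe.
  by rewrite ebe eqxx in eb.
have sum0 : \sum_(e <- msupp f) f@_e *: vv n D (e + c)%MM = 0.
  apply/matrixP => i k; rewrite summxE [RHS]mxE.
  have kD : nth [ffun=> 0] D k \in D by apply: mem_nth; rewrite sD.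
  transitivity ((f.@[fun i => nth [ffun=> 0] D k i]) * monval (nth [ffun=> 0] D k) c);
    last by rewrite (van _ kD) mul0r.
  rewrite mevalE big_distrl /=; apply: eq_bigr => e _.
  by rewrite !mxE monvalD mulrA.
rewrite (big_rem b) //= in sum0.
have fb0 : f@_b != 0 by rewrite -mcoeff_msupp.
have ea : vv n D a = - (f@_b)^-1 *: \sum_(e <- rem b (msupp f)) f@_e *: vv n D (e + c)%MM.
  move/eqP: sum0; rewrite addr_eq0 => /eqP e.
  by rewrite scaleNr -scalerN -e scalerA mulVf // scale1r ae.
move: Pa; rewrite ea; apply/negP/negPn.
apply: scalemx_sub; rewrite big_seq; apply: summx_sub => e He.
by apply: scalemx_sub; apply: allin.
Qed.

Lemma fan_size d n (D : seq (point d)) (le : expo d -> expo d -> Prop)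
   (L : seq (expo d)) :
  (0 < d)%N -> is_design n D -> term_order le ->
  (forall a, a \in L <-> in_L_of D le a) -> (n <= size L)%N.
Proof.
move=> d0 [uD sD] tord HL.
have tord' := tord; move: tord' => [lrefl [lanti ltrans ltot l0 lcomp]].
pose A : 'M[R]_(size L, n) :=
  \matrix_(j, k) monval (nth [ffun=> 0] D k) (nth 0%MM L j).
have inA : forall a, a \in L -> (vv n D a <= A)%MS.
  move=> a aL; have jL : (index a L < size L)%N by rewrite index_mem.
  have -> : vv n D a = row (Ordinal jL) A.
    by apply/matrixP => i k; rewrite !mxE /= nth_index.
  exact: row_sub.
apply: (full_rank_bound (A := A) d0 uD sD).
move=> a0; apply: NNPP => /negP P0.
have step := fan_step sD tord inA HL.
pose Q a a' := (le a' a /\ a' <> a) /\ ~~ (vv n D a' <= A)%MS.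
pose nxt a := epsilon (inhabits 0%MM) (Q a).
pose s := fix s k := if k is k'.+1 then nxt (s k') else a0.
have Ps : forall k, ~~ (vv n D (s k) <= A)%MS.
  elim=> [|k IH] //=; have := epsilon_spec (inhabits 0%MM) (Q (s k)) (step _ IH).
  by case.
have Ss : forall k, le (s k.+1) (s k) /\ s k.+1 <> s k.
  move=> k; have := epsilon_spec (inhabits 0%MM) (Q (s k)) (step _ (Ps k)).
  by case.
have chain : forall t i, le (s (t + i)%N) (s i).
  elim=> [|t IH] i; first by rewrite add0n.
  by rewrite addSn; apply: ltrans (IH i); case: (Ss (t + i)%N).
have [i [j [ij dij]]] := dickson s.
have l1 : le (s i) (s j).
  have e : s j = (s j - s i + s i)%MM by rewrite submK //; apply/mnm_lepP.
  rewrite e; rewrite -{1}[s i]add0m; apply: lcomp; exact: l0.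
have l2 : le (s j) (s i).
  by rewrite -(subnK (ltnW ij)); apply: chain.
have eij := lanti _ _ l1 l2.
have l3 : le (s j) (s i.+1) by rewrite -(subnK ij); apply: chain.
case: (Ss i) => l4 ne; apply: ne; apply: lanti => //.
by rewrite eij.
Qed.

Definition cwt d (c : 'I_d -> R) (a : expo d) : R := \sum_(i < d) c i * (a i)%:R.

Definition mkm d K (f : {ffun 'I_d -> 'I_K}) : expo d := [multinom (f i : nat) | i < d].
Definition box d K : seq (expo d) := [seq mkm f | f <- enum {ffun 'I_d -> 'I_K.+1}].

Lemma mem_box d K (a : expo d) : (a \in box d K) = [forall i, (a i <= K)%N].
Proof.
apply/idP/forallP.
  case/mapP => f _ -> i; rewrite /mkm mnmE -ltnS; exact: ltn_ord.
move=> H; apply/mapP; exists [ffun i => inord (a i)]; first by rewrite mem_enum.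
by apply/mnmP => i; rewrite /mkm mnmE ffunE inordK // ltnS; apply: H.
Qed.

Lemma uniq_box d K : uniq (box d K).
Proof.
rewrite map_inj_uniq ?enum_uniq // => f g e; apply/ffunP => i.
by apply: val_inj; have := congr1 (fun m : expo d => m i) e; rewrite /mkm !mnmE.
Qed.

Lemma size_box d K : size (box d K) = (K.+1 ^ d)%N.
Proof. by rewrite size_map -cardE card_ffun !card_ord. Qed.

Lemma cwt_le d (c : 'I_d -> R) (a b : expo d) : (forall i, 0 <= c i) ->
  expo_le b a -> cwt c b <= cwt c a.
Proof.
move=> c0 ba; apply: ler_sum => i _; apply: ler_wpM2l => //.
by rewrite ler_nat; apply: ba.
Qed.

Lemma cwt_ge0 d (c : 'I_d -> R) (a : expo d) : (forall i, 0 <= c i) -> 0 <= cwt c a.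
Proof. by move=> c0; apply: sumr_ge0 => i _; apply: mulr_ge0. Qed.

Lemma cwtD d (c : 'I_d -> R) (a b : expo d) : cwt c (a + b)%MM = cwt c a + cwt c b.
Proof.
by rewrite /cwt -big_split /=; apply: eq_bigr => i _; rewrite mnmDE natrD mulrDr.
Qed.

Lemma min_pos (s : seq R) : (forall x, x \in s -> 0 < x) ->
  exists e, 0 < e /\ forall x, x \in s -> e <= x.
Proof.
elim: s => [|y s IH] H; first by exists 1; split.
have [e [e0 He]] : exists e, 0 < e /\ forall x, x \in s -> e <= x.
  by apply: IH => x xs; apply: H; rewrite inE xs orbT.
have y0 : 0 < y by apply: H; rewrite inE eqxx.
exists (Num.min e y); split; first by rewrite lt_min e0 y0.
move=> x; rewrite inE => /orP [/eqP ->|xs]; first by rewrite ge_min lexx orbT.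
by rewrite ge_min He.
Qed.

Lemma corner_exists n d (w : 'I_d -> R) : (0 < n)%N -> (0 < d)%N ->
  (forall i, 0 < w i) ->
  exists (c : 'I_d -> R) (bt : R) (L : seq (expo d)),
  [/\ (forall i, 0 < c i), uniq L /\ size L = n,
      (forall a, a \in L -> cwt c a < bt),
      (forall a, a \notin L -> bt < cwt c a) &
      (forall a b, a \in L -> b \notin L -> cwt w a <= cwt w b)].
Proof.
move=> n0 d0 w0.
have w0' : forall i, 0 <= w i by move=> i; apply: ltW.
pose B := box d n.
pose u (a : expo d) := (\sum_(i < d) (n.+1) ^ i * a i)%N.
pose U := (\sum_(i < d) (n.+1) ^ i * n)%N.
have uU : forall a, a \in B -> (u a <= U)%N.
  move=> a; rewrite mem_box => /forallP H; apply: leq_sum => i _.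
  by rewrite leq_mul2l H orbT.
pose G := [seq cwt w p.1 - cwt w p.2 | p <- [seq (a, b) | a <- B, b <- B] &
   cwt w p.2 < cwt w p.1].
have [del [del0 Hdel]] : exists e, 0 < e /\ forall x, x \in G -> e <= x.
  apply: min_pos => x /mapP [p]; rewrite mem_filter => /andP [H _] ->.
  by rewrite subr_gt0.
pose eps := del / (2 * (U%:R + 1)).
have U0 : 0 < U%:R + 1 :> R by rewrite ltr_wpDl // ler0n.
have eps0 : 0 < eps by rewrite divr_gt0 // mulr_gt0.
have epsU : eps * U%:R < del.
  have e1 : eps * (U%:R + 1) = del / 2.
    rewrite /eps; field; rewrite lt0r_neq0 //.
  have : eps * U%:R < eps * (U%:R + 1) by rewrite ltr_pM2l // ltrDl.
  rewrite e1; lra.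
pose c i := w i + eps * ((n.+1) ^ i)%:R.
have cwE : forall a, cwt c a = cwt w a + eps * (u a)%:R.
  move=> a; rewrite /cwt /u natr_sum mulr_sumr -big_split /=.
  by apply: eq_bigr => i _; rewrite /c natrM; ring.
have key : forall a b, a \in B -> b \in B -> cwt w b < cwt w a -> cwt c b < cwt c a.
  move=> a b aB bB lt.
  have gG : cwt w a - cwt w b \in G.
    apply/mapP; exists (a, b) => //; rewrite mem_filter /= lt /=.
    by apply/allpairsP; exists (a, b).
  have := Hdel _ gG.
  have ub : eps * (u b)%:R <= eps * U%:R by rewrite ler_pM2l // ler_nat uU.
  have ua : 0 <= eps * (u a)%:R by rewrite mulr_ge0 // ?ltW.
  rewrite !cwE; lra.
have inj : {in B &, injective (cwt c)}.
  move=> a b aB bB e.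
  case: (ltrgtP (cwt w a) (cwt w b)) => H.
  - by have := key _ _ bB aB H; rewrite e ltxx.
  - by have := key _ _ aB bB H; rewrite e ltxx.
  have : (u a)%:R = (u b)%:R :> R.
    by apply: (mulfI (lt0r_neq0 eps0)); move: e; rewrite !cwE H => /addrI.
  move/eqP; rewrite eqr_nat => /eqP ue.
  move: aB bB; rewrite !mem_box => /forallP aB /forallP bB.
  by apply/mnmP; apply: (digits_inj _ _ ue) => i; rewrite ltnS.
pose V := sort <=%R (map (cwt c) B).
have uM : uniq (map (cwt c) B) by rewrite map_inj_in_uniq // uniq_box.
have uV : uniq V by rewrite sort_uniq.
have sV : size V = (n.+1 ^ d)%N by rewrite size_sort size_map size_box.
have nV : (n < size V)%N.
  rewrite sV -(subnKC d0) expnS; have := expn_gt0 n.+1 (d - 1); nia.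
have sortV : sorted <%R V by rewrite /V sort_lt_sorted.
have Vlt : forall i j, (i < j)%N -> (j < size V)%N -> nth 0 V i < nth 0 V j.
  move=> i j ij jV; apply: (sorted_ltn_nth lt_trans) => //.
  by rewrite inE; apply: ltn_trans jV.
pose bt := (nth 0 V n.-1 + nth 0 V n) / 2.
have Vn : nth 0 V n.-1 < nth 0 V n by apply: Vlt => //; lia.
have lo : forall i, (i < n)%N -> nth 0 V i < bt.
  move=> i hi; have : nth 0 V i <= nth 0 V n.-1.
    case: (ltngtP i n.-1) => h; [by apply/ltW/Vlt => //; lia| lia| by rewrite h].
  rewrite /bt; lra.
have hi : forall i, (n <= i)%N -> (i < size V)%N -> bt < nth 0 V i.
  move=> i h1 h2; have : nth 0 V n <= nth 0 V i.
    case: (ltngtP n i) => h; [by apply/ltW/Vlt| lia| by rewrite h].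
  rewrite /bt; lra.
have memV : forall a, a \in B -> cwt c a \in V.
  have pV : perm_eq V (map (cwt c) B) by rewrite /V perm_sort perm_refl.
  by move=> a aB; rewrite (perm_mem pV) map_f.
have dich : forall a, a \in B -> (cwt c a < bt) || (bt < cwt c a).
  move=> a /memV aV; rewrite -(nth_index 0 aV).
  have := index_mem (cwt c a) V; rewrite aV => iV.
  case: (ltnP (index (cwt c a) V) n) => h; first by rewrite lo.
  by rewrite hi ?orbT.
pose L := [seq a <- B | cwt c a < bt].
have memL : forall a, (a \in L) = (a \in B) && (cwt c a < bt).
  by move=> a; rewrite mem_filter andbC.
have uL : uniq L by rewrite filter_uniq // uniq_box.
have sL : size L = n.
  rewrite size_filter.
  have -> : count (fun a => cwt c a < bt) B = count (fun x => x < bt) V.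
    rewrite -(count_map (cwt c) (fun x => x < bt)).
    by apply/seq.permP; rewrite /V perm_sym perm_sort perm_refl.
  rewrite -(cat_take_drop n V) count_cat.
  have -> : count (fun x => x < bt) (take n V) = n.
    have : all (fun x => x < bt) (take n V).
      apply/(all_nthP 0) => i; rewrite size_take nV => hi1.
      by rewrite nth_take // lo.
    by rewrite all_count size_take nV => /eqP ->.
  have -> : count (fun x => x < bt) (drop n V) = 0%N.
    have : all (predC (fun x => x < bt)) (drop n V).
      apply/(all_nthP 0) => i; rewrite size_drop => hi2.
      rewrite nth_drop /= -leNgt ltW // hi ?leq_addr //.
      by move: hi2; rewrite ltn_subRL.
    by rewrite all_predC has_count -leqNgt leqn0 => /eqP.
  by rewrite addn0.
have c0 : forall i, 0 < c i.
  by move=> i; rewrite /c ltr_wpDr // mulr_ge0 // ltW.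
have c0' : forall i, 0 <= c i by move=> i; apply: ltW.
have stL : staircase L.
  split=> // a b aL ba; move: aL; rewrite !memL => /andP [aB ac].
  apply/andP; split.
    move: aB; rewrite !mem_box => /forallP aB; apply/forallP => i.
    by apply: leq_trans (aB i); apply: ba.
  by apply: le_lt_trans ac; apply: cwt_le.
have emB : forall i, em i n \in B.
  by move=> i; rewrite mem_box; apply/forallP => j; rewrite emE; case: eqP.
have emL : forall i, em i n \notin L.
  move=> i; apply/negP => /(stair_bound stL sL) /(_ i).
  by rewrite emE eqxx ltnn.
have outB : forall a, a \notin B -> exists i, expo_le (em i n) a.
  move=> a; rewrite mem_box => /forallPn [i]; rewrite -ltnNge => hi3.
  exists i => j; rewrite emE; case: eqP => [<-|_] //; exact: ltnW hi3.
have ninL : forall a, a \notin L -> bt < cwt c a.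
  have inB : forall a, a \in B -> a \notin L -> bt < cwt c a.
    move=> a aB; rewrite memL aB /= => H.
    by move: (dich a aB); rewrite (negbTE H).
  move=> a aL; case: (boolP (a \in B)) => aB; first exact: inB.
  have [i ei] := outB a aB.
  by apply: lt_le_trans (inB _ (emB i) (emL i)) _; apply: cwt_le.
exists c, bt, L; split=> //.
  by move=> a; rewrite memL => /andP [].
have inB : forall a b, a \in L -> b \in B -> b \notin L -> cwt w a <= cwt w b.
  move=> a b aL bB bL; have := ninL _ bL; move: aL; rewrite memL => /andP [aB ac] bc.
  rewrite leNgt; apply/negP => /(key _ _ aB bB); rewrite ltNge => /negP; apply.
  by apply: ltW; apply: lt_trans bc.
move=> a b aL bL; case: (boolP (b \in B)) => bB; first exact: inB.
have [i ei] := outB b bB.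
by apply: le_trans (inB _ _ aL (emB i) (emL i)) _; apply: cwt_le.
Qed.

Lemma sum_le_seq (X Y : seq R) : (size X <= size Y)%N ->
  (forall x y, x \in X -> y \in Y -> x <= y) -> (forall y, y \in Y -> 0 <= y) ->
  \sum_(x <- X) x <= \sum_(y <- Y) y.
Proof.
elim: X Y => [|x X IH] Y sXY Hxy Hy.
  by rewrite big_nil big_seq; apply: sumr_ge0 => y hy; apply: Hy.
case: Y sXY Hxy Hy => [//|y Y] /= sXY Hxy Hy.
rewrite !big_cons; apply: lerD.
  by apply: Hxy; rewrite inE eqxx.
apply: IH => //.
  by move=> x' y' hx hy; apply: Hxy; rewrite inE ?hx ?hy orbT.
by move=> y' hy; apply: Hy; rewrite inE hy orbT.
Qed.

Lemma exchange d (f : expo d -> R) (S T : seq (expo d)) :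
  uniq S -> uniq T -> (size S <= size T)%N ->
  (forall a b, a \in S -> b \notin S -> f a <= f b) -> (forall a, 0 <= f a) ->
  \sum_(a <- S) f a <= \sum_(a <- T) f a.
Proof.
move=> uS uT sST Hab f0.
rewrite (bigID (mem T)) [X in _ <= X](bigID (mem S)) /=.
have pe : perm_eq (filter (mem T) S) (filter (mem S) T).
  apply: uniq_perm; rewrite ?filter_uniq // => a.
  by rewrite !mem_filter andbC.
rewrite -[\sum_(a <- S | a \in T) f a]big_filter -[\sum_(a <- T | a \in S) f a]big_filter.
rewrite (perm_big _ pe) lerD2l.
rewrite -[\sum_(a <- S | _) f a]big_filter -[\sum_(a <- T | _) f a]big_filter.
rewrite -(big_map f xpredT (fun x => x)) -[X in _ <= X](big_map f xpredT (fun x => x)).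
apply: sum_le_seq.
- rewrite !size_map !size_filter.
  have e1 := count_predC (mem T) S; have e2 := count_predC (mem S) T.
  have e3 : count (mem T) S = count (mem S) T.
    by rewrite -!size_filter (perm_size pe).
  have -> : count (fun i : expo d => i \notin T) S = count (predC (mem T)) S by [].
  have -> : count (fun i : expo d => i \notin S) T = count (predC (mem S)) T by [].
  by rewrite -(leq_add2l (count (mem T) S)) e1 {1}e3 e2.
- move=> x y /mapP [a]; rewrite mem_filter => /andP [_ aS] -> /mapP [b].
  by rewrite mem_filter => /andP [bS _] ->; apply: Hab.
- by move=> y /mapP [b _ ->].
Qed.

Lemma big_sub_uniq (T : eqType) (s t : seq T) (F : T -> R) :
  uniq s -> uniq t -> {subset s <= t} ->
  (forall x, x \in t -> x \notin s -> F x = 0) ->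
  \sum_(x <- t) F x = \sum_(x <- s) F x.
Proof.
move=> us ut st F0.
rewrite (bigID (mem s)) /= [X in _ + X]big1_seq ?addr0; last first.
  by move=> x /andP [xs xt]; apply: F0.
rewrite -big_filter; apply: perm_big; apply: uniq_perm; rewrite ?filter_uniq //.
by move=> x; rewrite mem_filter; apply: andb_idr; apply: st.
Qed.

Definition cle d (c : 'I_d -> R) (a b : expo d) : Prop :=
  cwt c a < cwt c b \/ (cwt c a = cwt c b /\ (a <= b)%O).

Lemma cle_term d (c : 'I_d -> R) : (forall i, 0 < c i) -> term_order (cle c).
Proof.
move=> c0; have c0' : forall i, 0 <= c i by move=> i; apply: ltW.
split; first by move=> a; right.
split.
- move=> a b [h1|[h1 h2]] [h3|[h3 h4]].
  + by have := lt_trans h1 h3; rewrite ltxx.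
  + by move: h1; rewrite h3 ltxx.
  + by move: h3; rewrite h1 ltxx.
  + by apply: le_anti; rewrite h2 h4.
- move=> a b e [h1|[h1 h2]] [h3|[h3 h4]].
  + by left; apply: lt_trans h3.
  + by left; rewrite -h3.
  + by left; rewrite h1.
  + by right; split; [rewrite h1|apply: le_trans h4].
- move=> a b; case: (ltrgtP (cwt c a) (cwt c b)) => h.
  + by left; left.
  + by right; left.
  + by case/orP: (le_total a b) => h2; [left|right]; right.
- move=> a; have : cwt c 0%MM = 0.
    by rewrite /cwt big1 // => i _; rewrite mnm0E mulr0.
  move=> e0; have := cwt_ge0 a c0'; rewrite le_eqVlt => /orP [/eqP h|h].
    by right; split; [rewrite e0|apply: le0x].
  by left; rewrite e0.
- move=> a b e [h|[h1 h2]].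
    by left; rewrite !cwtD ltrD2r.
  by right; split; [rewrite !cwtD h1|rewrite lemc_add2l].
Qed.

Lemma fan_of n d (D : seq (point d)) (c : 'I_d -> R) bt (L : seq (expo d)) :
  (forall i, 0 < c i) -> uniq L -> size L = n -> size D = n ->
  (forall a, a \in L -> cwt c a < bt) -> (forall a, a \notin L -> bt < cwt c a) ->
  \det (design_matrix n D L) != 0 -> in_algebraic_fan D L.
Proof.
move=> c0 uL sL sD Lin Lout dnz.
have c0' : forall i, 0 <= c i by move=> i; apply: ltW.
set M := design_matrix n D L.
have Mu : M \in unitmx by rewrite unitmxE unitfE.
split => //; exists (cle c); split; first exact: cle_term.
have Mmul : forall (g : 'cV[R]_n) k,
    (M *m g) k 0 = \sum_(j < n) g j 0 * monval (nth [ffun=> 0] D k) (nth 0%MM L j).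
  by move=> g k; rewrite !mxE; apply: eq_bigr => j _; rewrite !mxE mulrC.
move=> a; split.
- move=> aL f b van fnz [bS blead] ba.
  have bL : b \in L.
    apply: contraT => bL; have := Lout _ bL; have := cwt_le c0' ba.
    have := Lin _ aL; lra.
  have suppL : {subset msupp f <= L}.
    move=> e eS; apply: contraT => eL; have := Lout _ eL.
    have : cwt c e <= cwt c b.
      by case: (blead e eS) => [h|[h _]]; [apply: ltW|rewrite h].
    have := Lin _ bL; lra.
  pose g : 'cV[R]_n := \col_(j < n) f@_(nth 0%MM L j).
  have Mg : M *m g = 0.
    apply/matrixP => k i; rewrite (ord1 i) Mmul [RHS]mxE.
    have kD : nth [ffun=> 0] D k \in D by apply: mem_nth; rewrite sD.
    transitivity (\sum_(m <- L) f@_m * monval (nth [ffun=> 0] D k) m).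
      rewrite (big_nth 0%MM) sL big_mkord; apply: eq_bigr => j _.
      by rewrite mxE.
    rewrite (big_sub_uniq (s := msupp f)) ?msupp_uniq //; last first.
      by move=> x _; rewrite mcoeff_msupp => /negbNE /eqP ->; rewrite mul0r.
    by rewrite /monval -mevalE; apply: van.
  have g0 : g = 0 by rewrite -(mulKmx Mu g) Mg mulmx0.
  have ib : (index b L < n)%N by rewrite -sL index_mem.
  have := congr1 (fun h : 'cV[R]_n => h (Ordinal ib) 0) g0.
  rewrite !mxE /= nth_index // => fb.
  by move: bS; rewrite mcoeff_msupp fb eqxx.
move=> HL; apply: contraT => aL.
pose y : 'cV[R]_n := \col_k monval (nth [ffun=> 0] D k) a.
pose g := invmx M *m y.
pose f : {mpoly R[d]} := 'X_[a] - \sum_(j < n) g j 0 *: 'X_[nth 0%MM L j].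
have nthL : forall j : 'I_n, nth 0%MM L j \in L.
  by move=> j; apply: mem_nth; rewrite sL.
have fcoef : forall e, f@_e = (a == e)%:R - \sum_(j < n) g j 0 * (nth 0%MM L j == e)%:R.
  move=> e; rewrite /f mcoeffB mcoeffX raddf_sum /=; congr (_ - _).
  by apply: eq_bigr => j _; rewrite mcoeffZ mcoeffX.
have fa : f@_a = 1.
  rewrite fcoef eqxx big1 ?subr0 // => j _.
  have : nth 0%MM L j != a by apply: contraNneq aL => <-.
  by move/negbTE ->; rewrite mulr0.
exfalso; apply: (HL f a); last by move=> i.
- move=> x xD.
  have ix : (index x D < n)%N by rewrite -sD index_mem.
  have xE : x = nth [ffun=> 0] D (Ordinal ix) by rewrite nth_index.
  rewrite /f mevalB mevalX (big_morph _ (mevalD _) (meval0 _)).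
  under eq_bigr => j _ do rewrite mevalZ mevalX.
  have := congr1 (fun h : 'cV[R]_n => h (Ordinal ix) 0) (mulKVmx Mu y).
  rewrite Mmul !mxE -xE => e.
  apply/eqP; rewrite subr_eq0; apply/eqP; rewrite -[LHS]/(monval x a) -e.
  by apply: eq_bigr => j _.
- by apply/eqP => f0; move: fa; rewrite f0 mcoeff0 => /eqP; rewrite eq_sym oner_eq0.
split; first by rewrite mcoeff_msupp fa oner_neq0.
move=> e eS; case: (eqVneq e a) => [->|ea]; first by right.
have eL : e \in L.
  apply: contraT => eL; move: eS; rewrite mcoeff_msupp fcoef.
  rewrite big1 ?subr0; first by rewrite (eq_sym a e) (negbTE ea) eqxx.
  move=> j _; have : nth 0%MM L j != e by apply: contraNneq eL => <-.
  by move/negbTE ->; rewrite mulr0.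
left; have := Lin _ eL; have := Lout _ aL; lra.
Qed.

Theorem theorem4 (n d : nat) (w : 'I_d -> R) :
  (0 < n)%N -> (0 < d)%N -> (forall i, 0 < w i) ->
  exists (D : seq (point d)) (L : seq (expo d)),
    [/\ generic n D, in_algebraic_fan D L &
        forall (D' : seq (point d)) (L' : seq (expo d)),
          is_design n D' -> in_algebraic_fan D' L' ->
          aberration n w L <= aberration n w L'].
Proof.
move=> n0 d0 w0.
have [c [bt [L [c0 [uL sL] Lin Lout Lw]]]] := corner_exists n0 d0 w0.
have c0' : forall i, 0 <= c i by move=> i; apply: ltW.
have stL : staircase L.
  split=> // a b aL ba; apply: contraT => bL.
  have := Lout _ bL; have := Lin _ aL; have := cwt_le c0' ba; lra.
have cc : corner_cut n L.
  split=> //; split=> //; exists c, bt => a; split; [exact: Lin | exact: Lout].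
exists (gD n d), L; split.
- exact: generic_gD.
- have [_ [_ [_ dnz]]] := (generic_gD n d0).2 L cc.
  exact: (fan_of c0 uL sL (size_gD n d) Lin Lout dnz).
- move=> D' L' dD' [uL' [le [tle HL']]].
  have sz := fan_size d0 dD' tle HL'.
  rewrite /aberration; apply: ler_wpM2l; first by rewrite invr_ge0 ler0n.
  apply: (exchange (f := cwt w)) => //; first by rewrite sL.
  by move=> a; apply: cwt_ge0 => i; apply: ltW.
Qed.
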